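(* Let $q\ge 2$, $F,P,m>0$, and consider positive reals $f_1,\dots,f_q,p_1,\dots,p_q$ subject to $\sum_i f_i=F$, $\sum_i p_i=P$, $f_1p_1\ge f_2p_2\ge\dots\ge f_qp_q$, and $f_1p_1\le m$. Then the supremum of $\sum_{i=1}^q f_ip_i$ under these constraints equals $f_{\max}(F,P,m)=FP$ if $FP\le m$; $\;um+(\sqrt{FP}-u\sqrt m)^2$ if $\frac{FP}{(u+1)^2}\le m<\frac{FP}{u^2}$ for some $u\in\{1,\dots,q-1\}$; $\;mq$ if $m<\frac{FP}{q^2}$. *)

(* Defs.v *)
From Stdlib Require Import Reals Lra Lia.
Open Scope R_scope.

(* sumR n g = g 0 + ... + g (n-1)  (indices shifted: f_i of the paper is f (i-1)) *)
Fixpoint sumR (n : nat) (g : nat -> R) : R :=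
  match n with
  | O => 0
  | S k => sumR k g + g k
  end.

Definition admissible (q : nat) (F P m : R) (f p : nat -> R) : Prop :=
  (forall i, (i < q)%nat -> 0 < f i /\ 0 < p i) /\
  sumR q f = F /\
  sumR q p = P /\
  (forall i, (S i < q)%nat -> f (S i) * p (S i) <= f i * p i) /\
  f 0%nat * p 0%nat <= m.

Definition objective_values (q : nat) (F P m : R) : R -> Prop :=
  fun s => exists f p : nat -> R,
    admissible q F P m f p /\ s = sumR q (fun i => f i * p i).

(* Main.v *)
Require Import Defs.
From Stdlib Require Import Reals Lra Lia Psatz.
Open Scope R_scope.

Lemma sumR_ext n g h : (forall i, (i < n)%nat -> g i = h i) -> sumR n g = sumR n h.
Proof. induction n; intros H; simpl; [lra|]. rewrite IHn by (intros; apply H; lia). rewrite H by lia. lra. Qed.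

Lemma sumR_le n g h : (forall i, (i < n)%nat -> g i <= h i) -> sumR n g <= sumR n h.
Proof. induction n; intros H; simpl; [lra|]. assert (sumR n g <= sumR n h) by (apply IHn; intros; apply H; lia).
 assert (g n <= h n) by (apply H; lia). lra. Qed.

Lemma sumR_const n c : sumR n (fun _ => c) = INR n * c.
Proof. induction n; simpl sumR; [simpl; lra|]. rewrite IHn, S_INR. lra. Qed.

Lemma sumR_scal n g c : sumR n (fun i => g i * c) = sumR n g * c.
Proof. induction n; simpl; [lra|]. rewrite IHn. lra. Qed.

Lemma sumR_shift n g : sumR (S n) g = g 0%nat + sumR n (fun i => g (S i)).
Proof. induction n; simpl; [lra|]. simpl in IHn. rewrite IHn. lra. Qed.

Lemma sumR_app a b g : sumR (a + b) g = sumR a g + sumR b (fun i => g (a + i)%nat).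
Proof. induction b; simpl. rewrite Nat.add_0_r; lra. rewrite Nat.add_succ_r; simpl. rewrite IHb. lra. Qed.

Lemma sumR_nonneg n g : (forall i, (i < n)%nat -> 0 <= g i) -> 0 <= sumR n g.
Proof. induction n; intros H; simpl; [lra|]. assert (0 <= sumR n g) by (apply IHn; intros; apply H; lia).
 assert (0 <= g n) by (apply H; lia). lra. Qed.

Lemma sum_mul_le n a b : (forall i, (i < n)%nat -> 0 <= a i /\ 0 <= b i) ->
  sumR n (fun i => a i * b i) <= sumR n a * sumR n b.
Proof. induction n; intros H; simpl; [lra|].
 assert (sumR n (fun i => a i * b i) <= sumR n a * sumR n b) by (apply IHn; intros; apply H; lia).
 assert (0 <= sumR n a) by (apply sumR_nonneg; intros; apply H; lia).
 assert (0 <= sumR n b) by (apply sumR_nonneg; intros; apply H; lia).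
 destruct (H n) as [Ha Hb]; [lia|]. nra. Qed.

Lemma cs_sqrt n a b : (forall i, (i < n)%nat -> 0 <= a i /\ 0 <= b i) ->
  sumR n (fun i => sqrt (a i * b i)) <= sqrt (sumR n a) * sqrt (sumR n b).
Proof. induction n; intros H; simpl. rewrite sqrt_0; lra.
 assert (HI: sumR n (fun i => sqrt (a i * b i)) <= sqrt (sumR n a) * sqrt (sumR n b)) by (apply IHn; intros; apply H; lia).
 assert (0 <= sumR n a) by (apply sumR_nonneg; intros; apply H; lia).
 assert (0 <= sumR n b) by (apply sumR_nonneg; intros; apply H; lia).
 destruct (H n) as [Ha Hb]; [lia|].
 rewrite sqrt_mult_alt by lra.
 set (A := sumR n a) in *. set (B := sumR n b) in *.
 assert (sqrt A * sqrt B + sqrt (a n) * sqrt (b n) <= sqrt (A + a n) * sqrt (B + b n)); [|lra].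
 replace (sqrt (A + a n) * sqrt (B + b n)) with (sqrt ((A + a n) * (B + b n))) by (apply sqrt_mult_alt; lra).
 pose proof (sqrt_pos A); pose proof (sqrt_pos B); pose proof (sqrt_pos (a n)); pose proof (sqrt_pos (b n)).
 rewrite <- (sqrt_pow2 (sqrt A * sqrt B + sqrt (a n) * sqrt (b n))) by nra.
 apply sqrt_le_1_alt.
 pose proof (sqrt_sqrt A H0); pose proof (sqrt_sqrt B H1); pose proof (sqrt_sqrt _ Ha); pose proof (sqrt_sqrt _ Hb).
 set (s := sqrt A) in *. set (t := sqrt B) in *. set (x := sqrt (a n)) in *. set (y := sqrt (b n)) in *.
 rewrite <- H6, <- H7, <- H8, <- H9.
 assert (E: (s*s+x*x)*(t*t+y*y) - (s*t+x*y)^2 = (s*y-x*t)^2) by ring. pose proof (pow2_ge_0 (s*y-x*t)). lra.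
Qed.

Fixpoint cntR (r : R) (x : nat -> R) (n : nat) : nat :=
  match n with O => O | S k => if Rlt_dec r (x k) then S (cntR r x k) else cntR r x k end.

Lemma sq_bound n (x : nat -> R) (u : nat) M r :
 0 <= r <= M -> (forall i, (i<n)%nat -> 0 <= x i <= M) -> sumR n x <= INR u * M + r ->
 sumR n (fun i => x i ^ 2) <= INR u * M^2 + r^2.
Proof.
 intros Hr Hx Hs.
 pose (pos := fun i => if Rlt_dec r (x i) then x i - r else 0).
 assert (Ha: sumR n (fun i => x i ^ 2) <= r * sumR n x + M * sumR n pos).
 { clear Hs. induction n; cbn [sumR]; [lra|].
   assert (sumR n (fun i => x i ^ 2) <= r * sumR n x + M * sumR n pos) by (apply IHn; intros; apply Hx; lia).
   destruct (Hx n) as [H1 H2]; [lia|]. unfold pos at 2. destruct (Rlt_dec r (x n)).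
   - assert (0 <= (x n - r)*(M - x n)) by (apply Rmult_le_pos; lra). clearbody pos. nra.
   - assert (0 <= x n * (r - x n)) by (apply Rmult_le_pos; lra). clearbody pos. nra. }
 assert (Hb: sumR n pos <= INR (cntR r x n) * (M - r) /\ sumR n pos <= sumR n x - INR (cntR r x n) * r).
 { clear Hs Ha. induction n; cbn [sumR cntR]; [simpl; lra|].
   destruct IHn as [I1 I2]; [intros; apply Hx; lia|].
   destruct (Hx n) as [H1 H2]; [lia|]. unfold pos at 2 4. destruct (Rlt_dec r (x n)); try rewrite S_INR; clearbody pos; split; lra. }
 assert (Hc: sumR n pos <= INR u * (M - r)).
 { destruct (Compare_dec.le_lt_dec (cntR r x n) u) as [Hl|Hl].
   - apply le_INR in Hl. clearbody pos; nra.
   - apply le_INR in Hl. rewrite S_INR in Hl. clearbody pos. nra. }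
 nra.
Qed.

Lemma adm_le_m q F P m f p : admissible q F P m f p -> forall i, (i < q)%nat -> f i * p i <= m.
Proof. intros [H1 [H2 [H3 [H4 H5]]]] i. induction i; intros Hi; [lra|].
 pose proof (H4 i Hi). pose proof (IHi ltac:(lia)). lra. Qed.

Definition lam (u : nat) (c w d : R) (i : nat) : R :=
  if (i <? u)%nat then c else if (i =? u)%nat then w else d.

Lemma lam_lt u c w d i : (i < u)%nat -> lam u c w d i = c.
Proof. intros h. unfold lam. apply Nat.ltb_lt in h. now rewrite h. Qed.
Lemma lam_eq u c w d : lam u c w d u = w.
Proof. unfold lam. rewrite Nat.ltb_irrefl, Nat.eqb_refl. reflexivity. Qed.
Lemma lam_gt u c w d i : (u < i)%nat -> lam u c w d i = d.
Proof. intros h. unfold lam. replace (i <? u)%nat with false by (symmetry; apply Nat.ltb_ge; lia).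
 replace (i =? u)%nat with false by (symmetry; apply Nat.eqb_neq; lia). reflexivity. Qed.

Lemma lam_sum u k c w d (g : R -> R) :
  sumR (u + S k) (fun i => g (lam u c w d i)) = INR u * g c + g w + INR k * g d.
Proof.
 rewrite sumR_app, sumR_shift.
 rewrite (sumR_ext u _ (fun _ => g c)) by (intros; now rewrite lam_lt).
 rewrite (sumR_ext k _ (fun _ => g d)) by (intros; rewrite lam_gt by lia; reflexivity).
 rewrite !sumR_const, Nat.add_0_r, lam_eq. lra.
Qed.

Lemma constr q u F P m c eps : (u + 1 <= q)%nat -> 0 < F -> 0 < P -> 0 < c ->
  0 < 1 - INR u * c <= c -> c^2 * (F * P) <= m -> 0 < eps ->
  exists s, objective_values q F P m s /\ F * P * (INR u * c^2 + (1 - INR u * c)^2) - eps < s.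
Proof.
 intros Hq HF HP Hc Hw Hm He.
 remember (q - u - 1)%nat as k eqn:Ek.
 assert (Hqk : q = (u + S k)%nat) by lia.
 remember (1 - INR u * c) as w eqn:Ew.
 pose proof (pos_INR k) as Hk.
 pose proof (pos_INR u) as Hu.
 remember (Rmin (w / (INR k + 1)) (eps / (2 * F * P * (INR k + 1)))) as d eqn:Ed.
 assert (Hd0 : 0 < d). { rewrite Ed. apply Rmin_glb_lt; apply Rdiv_lt_0_compat; try lra; repeat apply Rmult_lt_0_compat; lra. } 
 assert (Hd1 : (INR k + 1) * d <= w).
 { assert (d <= w / (INR k + 1)) by (rewrite Ed; apply Rmin_l). apply Rmult_le_compat_l with (r := INR k + 1) in H; [|lra].
   replace ((INR k + 1) * (w / (INR k + 1))) with w in H by (field; lra). lra. }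
 assert (Hd2 : 2 * F * P * (INR k + 1) * d <= eps).
 { assert (d <= eps / (2 * F * P * (INR k + 1))) by (rewrite Ed; apply Rmin_r).
   assert (0 < 2 * F * P * (INR k + 1)) by (repeat apply Rmult_lt_0_compat; lra).
   apply Rmult_le_compat_l with (r := 2 * F * P * (INR k + 1)) in H; [|lra].
   replace (2 * F * P * (INR k + 1) * (eps / (2 * F * P * (INR k + 1)))) with eps in H by (field; lra). lra. }
 remember (lam u c (w - INR k * d) d) as L eqn:EL.
 assert (HLpos : forall i, 0 < L i /\ L i <= c).
 { intros i. rewrite EL. destruct (Nat.lt_trichotomy i u) as [h|[h|h]].
   - rewrite lam_lt by exact h. lra.
   - subst i. rewrite lam_eq. nra.
   - rewrite lam_gt by exact h. nra. }
 assert (HLmon : forall i, L (S i) <= L i).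
 { intros i. rewrite EL. destruct (Nat.lt_trichotomy (S i) u) as [h|[h|h]].
   - rewrite !lam_lt by lia. lra.
   - rewrite h, lam_eq, lam_lt by lia. nra.
   - destruct (Nat.eq_dec i u) as [e|e].
     + subst i. rewrite lam_eq, lam_gt by lia. nra.
     + rewrite !lam_gt by lia. lra. }
 exists (sumR q (fun i => L i * F * (L i * P))). split.
 - exists (fun i => L i * F), (fun i => L i * P). split; [|reflexivity].
   assert (HS : sumR q L = 1).
   { rewrite Hqk, EL. etransitivity; [apply (lam_sum u k c (w - INR k * d) d (fun x => x))|].
     rewrite Ew. ring. }
   repeat split.
   + destruct (HLpos i); nra.
   + destruct (HLpos i); nra.
   + rewrite sumR_scal, HS. ring.
   + rewrite sumR_scal, HS. ring.
   + intros i _. pose proof (HLmon i). destruct (HLpos i), (HLpos (S i)).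
     assert (L (S i) * L (S i) <= L i * L i) by nra.
     replace (L (S i) * F * (L (S i) * P)) with ((L (S i) * L (S i)) * (F * P)) by ring.
     replace (L i * F * (L i * P)) with ((L i * L i) * (F * P)) by ring.
     apply Rmult_le_compat_r; [apply Rmult_le_pos|]; lra.
   + destruct (HLpos 0%nat). assert (L 0%nat * L 0%nat <= c * c) by nra.
     replace (L 0%nat * F * (L 0%nat * P)) with ((L 0%nat * L 0%nat) * (F * P)) by ring.
     assert ((L 0%nat * L 0%nat) * (F * P) <= (c * c) * (F * P)) by (apply Rmult_le_compat_r; [apply Rmult_le_pos|]; lra).
     simpl in Hm. lra.
 - rewrite (sumR_ext q _ (fun i => L i ^ 2 * (F * P))) by (intros; ring).
   rewrite sumR_scal. rewrite Hqk.
   pose proof (lam_sum u k c (w - INR k * d) d (fun x => x ^ 2)) as E.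
   rewrite EL, E.
   assert (w <= 1) by (rewrite Ew; nra).
   assert (0 <= INR k * d) by nra.
   assert ((w - INR k * d) ^ 2 >= w^2 - 2 * (INR k * d)) by nra.
   assert (HFP: 0 < F * P) by nra.
   assert (2 * F * P * (INR k * d) < eps) by nra.
   set (A := INR u * c ^ 2) in *. set (B := w - INR k * d) in *. set (kd := INR k * d) in *.
   assert (F * P * (A + w ^ 2) - F * P * (A + B ^ 2 + INR k * (d ^ 2)) <= 2 * F * P * kd).
   { assert (0 <= INR k * (d ^ 2)) by (apply Rmult_le_pos; nra).
     assert (A + w ^ 2 - (A + B ^ 2 + INR k * (d ^ 2)) <= 2 * kd) by lra.
     apply Rmult_le_compat_l with (r := F * P) in H4; lra. }
   lra.
Qed.

Lemma lub_of V E : (forall s, E s -> s <= V) ->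
  (forall eps, 0 < eps -> exists s, E s /\ V - eps < s) -> is_lub E V.
Proof. intros H1 H2. split; [exact H1|]. intros b Hb.
 destruct (Rle_lt_dec V b) as [h|h]; [exact h|].
 destruct (H2 (V - b)) as [s [Hs Hs']]; [lra|]. apply Hb in Hs. lra. Qed.

Lemma sq_le a b : 0 <= a -> 0 <= b -> a ^ 2 <= b ^ 2 -> a <= b.
Proof. intros. destruct (Rle_lt_dec a b); [auto|]. nra. Qed.
Lemma sq_lt a b : 0 <= a -> 0 <= b -> a ^ 2 < b ^ 2 -> a < b.
Proof. intros. destruct (Rle_lt_dec b a); [|auto]. nra. Qed.

Lemma adm_pos q F P m f p : admissible q F P m f p -> forall i, (i < q)%nat -> 0 <= f i /\ 0 <= p i.
Proof. intros [H _] i Hi. destruct (H i Hi); split; lra. Qed.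

Lemma case1 q F P m : (2 <= q)%nat -> 0 < F -> 0 < P -> 0 < m -> F * P <= m ->
  is_lub (objective_values q F P m) (F * P).
Proof.
 intros hq hF hP hm H. apply lub_of.
 - intros s [f [p [Ha ->]]]. pose proof (sum_mul_le q f p (adm_pos _ _ _ _ _ _ Ha)).
   destruct Ha as [_ [HF [HP _]]]. rewrite HF, HP in H0. exact H0.
 - intros eps He. destruct (constr q 0 F P m 1 eps) as [s [Hs Hs']]; simpl; try lra; try lia.
   exists s. split; [exact Hs|]. simpl in Hs'. nra.
Qed.

Lemma case2 q F P m u : (2 <= q)%nat -> 0 < F -> 0 < P -> 0 < m ->
  (1 <= u)%nat -> (u <= q - 1)%nat ->
  F * P / (INR u + 1) ^ 2 <= m -> m < F * P / INR u ^ 2 ->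
  is_lub (objective_values q F P m) (INR u * m + (sqrt (F * P) - INR u * sqrt m) ^ 2).
Proof.
 intros hq hF hP hm hu1 hu2 H1 H2.
 assert (HFP : 0 < F * P) by nra.
 set (U := INR u) in *.
 assert (HU : 1 <= U) by (unfold U; apply (le_INR 1); lia).
 pose proof (sqrt_lt_R0 _ HFP) as HS. pose proof (sqrt_lt_R0 _ hm) as HM.
 pose proof (pow2_sqrt (F*P) (Rlt_le _ _ HFP)) as ES. pose proof (pow2_sqrt m (Rlt_le _ _ hm)) as EM.
 set (S := sqrt (F * P)) in *. set (M := sqrt m) in *.
 assert (DS : sqrt (F * P) = S) by reflexivity. assert (DM : sqrt m = M) by reflexivity. assert (DU : INR u = U) by reflexivity. clearbody S M U.
 assert (H1' : F * P <= m * (U + 1) ^ 2).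
 { apply Rmult_le_compat_r with (r := (U+1)^2) in H1; [|nra].
   replace (F * P / (U + 1) ^ 2 * (U + 1) ^ 2) with (F * P) in H1 by (field; nra). lra. }
 assert (H2' : m * U ^ 2 < F * P).
 { apply Rmult_lt_compat_r with (r := U^2) in H2; [|nra].
   replace (F * P / U ^ 2 * U ^ 2) with (F * P) in H2 by (field; nra). lra. }
 assert (Hup : S <= (U + 1) * M).
 { apply sq_le; nra. }
 assert (Hlo : U * M < S).
 { apply sq_lt; nra. }
 apply lub_of.
 - intros s [f [p [Ha ->]]].
   pose proof (adm_pos _ _ _ _ _ _ Ha) as Hpos. pose proof (adm_le_m _ _ _ _ _ _ Ha) as Hle.
   pose proof (cs_sqrt q f p Hpos) as CS.
   destruct Ha as [_ [HF [HP _]]]. rewrite HF, HP, <- sqrt_mult_alt in CS by lra. rewrite DS in CS.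
   assert (B := sq_bound q (fun i => sqrt (f i * p i)) u M (S - U * M)).
   rewrite DU in B.
   rewrite (sumR_ext q (fun i => sqrt (f i * p i) ^ 2) (fun i => f i * p i)) in B.
   + rewrite EM in B. apply B; [lra| |lra].
     intros i Hi. split; [apply sqrt_pos|]. rewrite <- DM. apply sqrt_le_1_alt. apply Hle; exact Hi.
   + intros i Hi. apply pow2_sqrt. destruct (Hpos i Hi). nra.
 - intros eps He.
   assert (Hc : 0 < M / S) by (apply Rdiv_lt_0_compat; lra).
   assert (E1 : 1 - U * (M / S) = (S - U * M) / S) by (field; lra).
   assert (E2 : (M / S) ^ 2 * (F * P) = m) by (rewrite <- ES, <- EM; field; lra).
   destruct (constr q u F P m (M / S) eps) as [s [Hs Hs']]; try lia; try lra.
   + rewrite DU, E1. split. apply Rdiv_lt_0_compat; lra.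
     apply Rmult_le_compat_r; [apply Rlt_le, Rinv_0_lt_compat; lra| lra].
   + exists s. split; [exact Hs|].
     rewrite DU in Hs'.
     replace (F * P * (U * (M / S) ^ 2 + (1 - U * (M / S)) ^ 2)) with (U * m + (S - U * M) ^ 2) in Hs'.
     * lra.
     * rewrite <- ES, <- EM. field. lra.
Qed.

Lemma case3 q F P m : (2 <= q)%nat -> 0 < F -> 0 < P -> 0 < m ->
  m < F * P / INR q ^ 2 -> is_lub (objective_values q F P m) (m * INR q).
Proof.
 intros hq hF hP hm H.
 set (n := INR q) in *.
 assert (Hn : 2 <= n) by (unfold n; apply (le_INR 2); lia).
 assert (DN : INR q = n) by reflexivity. clearbody n.
 assert (H' : m * n ^ 2 < F * P).
 { apply Rmult_lt_compat_r with (r := n^2) in H; [|nra].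
   replace (F * P / n ^ 2 * n ^ 2) with (F * P) in H by (field; nra). lra. }
 set (Q := fun a => (n-1)*m*(F - (n-1)*a) + a*(m - P*(F - (n-1)*a))).
 assert (Hc : continuity (fun a => - Q a)) by (unfold Q; reg).
 assert (HQ0 : Q 0 = (n-1)*m*F) by (unfold Q; ring).
 assert (HQ1 : Q (F/n) = F / n ^ 2 * (m * n^2 - F * P)) by (unfold Q; field; lra).
 assert (HF1 : 0 < F / n ^ 2) by (apply Rdiv_lt_0_compat; nra).
 destruct (IVT (fun a => - Q a) 0 (F/n) Hc) as [z [[Hz1 Hz2] Hz]].
 { apply Rdiv_lt_0_compat; lra. }
 { rewrite HQ0. assert (0 < (n-1)*m*F) by (repeat apply Rmult_lt_0_compat; lra). lra. }
 { rewrite HQ1. assert (0 < F / n ^ 2 * (F * P - m * n^2)) by (apply Rmult_lt_0_compat; lra). lra. }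
 assert (Qz : Q z = 0) by lra.
 assert (Hz0 : 0 < z).
 { destruct Hz1 as [h|h]; [exact h|]. subst z. rewrite HQ0 in Qz.
   assert (0 < (n-1)*m*F) by (repeat apply Rmult_lt_0_compat; lra). lra. }
 assert (Hzn : z < F / n).
 { destruct Hz2 as [h|h]; [exact h|]. subst z. rewrite HQ1 in Qz.
   assert (0 < F / n ^ 2 * (F * P - m * n^2)) by (apply Rmult_lt_0_compat; lra). lra. }
 set (b := F - (n-1)*z).
 assert (Hb : 0 < b).
 { unfold b. assert (n * z < F).
   { apply Rmult_lt_compat_l with (r := n) in Hzn; [|lra].
     replace (n * (F / n)) with F in Hzn by (field; lra). lra. }
   lra. }
 assert (HP' : (n-1)*(m/z) + m/b = P).
 { assert (E : (n-1)*(m/z) + m/b - P = Q z / (z * b)) by (unfold Q, b in *; field; lra).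
   rewrite Qz in E. unfold Rdiv in E. rewrite Rmult_0_l in E. lra. }
 set (f := fun i => if (i <? q - 1)%nat then z else b).
 set (p := fun i => if (i <? q - 1)%nat then m / z else m / b).
 assert (Hprod : forall i, f i * p i = m).
 { intros i. unfold f, p. destruct (i <? q - 1)%nat; field; lra. }
 assert (Hq1 : q = S (q - 1)) by lia.
 assert (DN1 : INR (q - 1) = n - 1) by (rewrite minus_INR by lia; rewrite DN; simpl; lra).
 assert (Hpre : forall x y : R, (sumR (q-1) (fun i => if (i <? q - 1)%nat then x else y)) = INR (q-1) * x).
 { intros x y. rewrite <- sumR_const. apply sumR_ext. intros i Hi. apply Nat.ltb_lt in Hi. now rewrite Hi. }
 assert (Hlast : ((q - 1) <? q - 1)%nat = false) by apply Nat.ltb_irrefl.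
 assert (Hval : sumR q (fun i => f i * p i) = m * n).
 { rewrite (sumR_ext q _ (fun _ => m)) by (intros; apply Hprod). rewrite sumR_const, DN. ring. }
 assert (Hadm : admissible q F P m f p).
 { repeat split.
   - unfold f. destruct (i <? q - 1)%nat; lra.
   - unfold p. destruct (i <? q - 1)%nat; apply Rdiv_lt_0_compat; lra.
   - rewrite Hq1. cbn [sumR]. unfold f. rewrite Hpre, Hlast.
     rewrite DN1. unfold b. ring.
   - rewrite Hq1. cbn [sumR]. unfold p. rewrite Hpre, Hlast.
     rewrite DN1. lra.
   - intros i _. rewrite !Hprod. lra.
   - rewrite Hprod. lra. }
 rewrite <- DN in Hval. split.
 - intros s [f' [p' [Ha ->]]]. rewrite <- DN.
   assert (sumR q (fun i => f' i * p' i) <= sumR q (fun _ => m)) by (apply sumR_le; apply (adm_le_m _ _ _ _ _ _ Ha)).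
   rewrite sumR_const in H0. lra.
 - intros c Hc'. apply Hc'. exists f, p. split; [exact Hadm|]. rewrite Hval, DN. reflexivity.
Qed.

Theorem lemmaA2 (q : nat) (F P m : R)
  (hq : (2 <= q)%nat) (hF : 0 < F) (hP : 0 < P) (hm : 0 < m) :
  (F * P <= m -> is_lub (objective_values q F P m) (F * P)) /\
  (forall u : nat, (1 <= u)%nat -> (u <= q - 1)%nat ->
     F * P / (INR u + 1) ^ 2 <= m -> m < F * P / INR u ^ 2 ->
     is_lub (objective_values q F P m)
       (INR u * m + (sqrt (F * P) - INR u * sqrt m) ^ 2)) /\
  (m < F * P / INR q ^ 2 -> is_lub (objective_values q F P m) (m * INR q)).
Proof.
 split; [|split].
 - apply case1; assumption.
 - intros u; apply case2; assumption.
 - apply case3; assumption.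
Qed.
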